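(* Let $\underline{t}$ be an increment array of size $s$ for $n$ agents, let $y\in\{1,\ldots,n\}$, and write $C=C(y,\underline{t})=\{x_1,x_2,\ldots,x_s\}$ with $x_1<x_2<\cdots<x_s$. Then there is an increment array $\underline{u}=\langle u_0,\ldots,u_{s-1}\rangle$ with $\underline{t}\approx\underline{u}$ such that $C(x_1,\underline{u})=C$ and $C(x_1,\underline{u})$ generates the elements of $C$ in strictly increasing order, i.e. \[x_i\in\Big\{x_1+\sum_{k=0}^{i-2}u_k+i-1,\; x_1+\sum_{k=0}^{i-2}u_k+i-1-n\Big\}\quad\text{for all }2\le i\le s.\]
   Context: Agent identifiers are $\{1,\ldots,n\}$, arithmetic on identifiers is modulo $n$ with representatives in $\{1,\ldots,n\}$ (a value $0$ is replaced by $n$). An increment array (IA) of size $s$ ($1\le s\le n$) for $n$ agents is a tuple $\underline{t}=\langle t_0,\ldots,t_{s-1}\rangle$ of non-negative integers with $\sum t_i=n-s$. Cumulative increments: $\varphi_1=0$, $\varphi_i=\sum_{k=0}^{i-2}(t_k+1)$ for $2\le i\le s+1$. The coalition generated from $x$ is $C(x,\underline{t})=\{x\}\cup\bigcup_{i=2}^{s}\{(x+\varphi_i)\bmod n\}$ (residues in $\{1,\ldots,n\}$). Two IAs of the same size are equivalent, $\underline{t}\approx\underline{u}$, if $\underline{u}$ is a circular shift of $\underline{t}$: there is $0\le k\le s-1$ with $\langle u_0,\ldots,u_{s-1}\rangle=\langle t_k,\ldots,t_{s-1},t_0,\ldots,t_{k-1}\rangle$. *)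

(* Defs.v *)
From mathcomp Require Import all_boot.
Set Implicit Arguments. Unset Strict Implicit. Unset Printing Implicit Defensive.

Definition IA (n s : nat) (t : seq nat) : bool :=
  [&& 1 <= s <= n, size t == s & sumn t == n - s].

Definition phi (t : seq nat) (i : nat) : nat :=
  \sum_(0 <= k < i.-1) (nth 0 t k).+1.

Definition resid (n a : nat) : nat :=
  if a %% n == 0 then n else a %% n.

Definition coalition (n x : nat) (t : seq nat) : seq nat :=
  x :: [seq resid n (x + phi t i) | i <- iota 2 (size t).-1].

Definition IA_equiv (t u : seq nat) : Prop :=
  size u = size t /\ exists2 k, k < size t & u = rot k t.

(* Main.v *)
Require Import Defs.
From mathcomp Require Import all_boot zify.

Lemma resid_id n a : 1 <= a <= n -> resid n a = a.
Proof.
move=> /andP[h1 h2]; rewrite /resid.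
have [->|hlt] := eqVneq a n; first by rewrite modnn eqxx.
have hl : a < n by rewrite ltn_neqAle hlt h2.
by rewrite modn_small // ; case: a h1 {h2 hlt hl}.
Qed.

Lemma resid_mod n a : resid n a %% n = a %% n.
Proof. by rewrite /resid; case: eqP => [->|_]; rewrite ?modnn ?modn_mod. Qed.

Lemma resid_eqmod n a b : a %% n = b %% n -> resid n a = resid n b.
Proof. by rewrite /resid => ->. Qed.

Lemma resid_range n a : 0 < n -> 1 <= resid n a <= n.
Proof.
move=> n0; rewrite /resid; case: eqP => [_|h]; first by rewrite n0 leqnn.
have := ltn_pmod a n0. move/eqP: h. lia.
Qed.

Lemma resid_addl n a b : resid n (resid n a + b) = resid n (a + b).
Proof. by apply: resid_eqmod; rewrite -modnDml resid_mod modnDml. Qed.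

Lemma resid_sub n a : n < a <= n + n -> resid n a = a - n.
Proof.
move=> /andP[h1 h2].
have -> : a = (a - n) + n by rewrite subnK // ltnW.
rewrite addnK; rewrite (@resid_eqmod _ _ (a - n)); last by rewrite modnDr.
apply: resid_id; apply/andP; split; lia.
Qed.

Definition P (t : seq nat) (m : nat) := \sum_(0 <= k < m) (nth 0 t (k %% size t)).+1.

Lemma P_add t a b : P t (a + b) = P t a + \sum_(0 <= k < b) (nth 0 t ((a + k) %% size t)).+1.
Proof.
elim: b => [|b IH]; first by rewrite big_geq // !addn0.
by rewrite addnS /P big_nat_recr //= -/(P t (a + b)) IH big_nat_recr //= addnA.
Qed.

Lemma P_ge t a c : P t a + c <= P t (a + c).
Proof.
elim: c => [|c IH]; first by rewrite !addn0.
rewrite !addnS /P big_nat_recr //= -/(P t (a + c)) -/(P t a). lia.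
Qed.

Lemma sum_nth_S (t : seq nat) : \sum_(0 <= k < size t) (nth 0 t k).+1 = sumn t + size t.
Proof.
elim: t => [|x t IH]; first by rewrite big_geq.
by rewrite /= big_nat_recl //= IH; lia.
Qed.

Lemma P_full t : P t (size t) = sumn t + size t.
Proof.
rewrite /P -sum_nth_S; apply: eq_big_nat => k /andP[_ hk].
by rewrite modn_small.
Qed.

Lemma P_period t a : P t (size t + a) = P t (size t) + P t a.
Proof.
rewrite P_add; congr (_ + _); apply: eq_big_nat => k _.
by rewrite modnDl.
Qed.

Lemma P_mul t q r : P t (q * size t + r) = q * P t (size t) + P t r.
Proof.
elim: q => [|q IH]; first by rewrite !mul0n.
by rewrite mulSn -addnA P_period IH mulSn addnA.
Qed.

Lemma P_mod n t y m : P t (size t) = n ->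
  resid n (y + P t m) = resid n (y + P t (m %% size t)).
Proof.
move=> hn; apply: resid_eqmod.
rewrite {1}(divn_eq m (size t)) P_mul hn addnCA.
by rewrite modnMDl.
Qed.

Lemma phi_P t i : i.-1 <= size t -> phi t i = P t i.-1.
Proof.
move=> hi; rewrite /phi /P; apply: eq_big_nat => k /andP[_ hk].
by rewrite modn_small //; apply: leq_trans hk hi.
Qed.

Lemma nth_rot0 j (t : seq nat) k : j <= size t -> k < size t ->
  nth 0 (rot j t) k = nth 0 t ((j + k) %% size t).
Proof.
move=> hj hk; rewrite /rot nth_cat size_drop nth_drop.
case: ifP => h.
  by rewrite modn_small //; lia.
rewrite nth_take; last by lia.
congr nth.
have -> : j + k = (j + k - size t) + size t by lia.
rewrite modnDr modn_small; lia.
Qed.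

Lemma phi_rot j t m : j <= size t -> m <= size t ->
  phi (rot j t) m.+1 = P t (j + m) - P t j.
Proof.
move=> hj hm; rewrite P_add addKn /phi /=.
apply: eq_big_nat => k /andP[_ hk].
by rewrite nth_rot0 //; apply: leq_trans hk hm.
Qed.

Lemma argmin_ex (f : nat -> nat) s : 0 < s ->
  exists2 j, j < s & forall m, m < s -> f j <= f m.
Proof.
elim: s => // s IH _.
case: s IH => [|s] IH.
  by exists 0 => // m; rewrite ltnS leqn0 => /eqP ->.
have [j hj hm] := IH isT.
have [le|lt] := leqP (f j) (f s.+1).
  exists j; first by apply: ltnW.
  move=> m; rewrite ltnS leq_eqVlt => /orP[/eqP ->|]; [done|exact: hm].
exists s.+1 => // m; rewrite ltnS leq_eqVlt => /orP[/eqP ->|/hm h]; first done.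
by apply: leq_trans (ltnW lt) h.
Qed.

Lemma sumS (F : nat -> nat) m : \sum_(0 <= k < m) (F k).+1 = \sum_(0 <= k < m) F k + m.
Proof.
elim: m => [|m IH]; first by rewrite !big_geq.
by rewrite !big_nat_recr //= IH; lia.
Qed.

Lemma P0 t : P t 0 = 0.
Proof. by rewrite /P big_geq. Qed.

Theorem lemma4 (n s : nat) (t : seq nat) (y : nat) :
  IA n s t -> 1 <= y <= n ->
  let xs := sort leq (coalition n y t) in
  let x := fun i => nth 0 xs i.-1 in
  exists u : seq nat,
    [/\ IA n s u, IA_equiv t u,
        coalition n (x 1) u =i coalition n y t &
        forall i, 2 <= i <= s ->
          let a := x 1 + \sum_(0 <= k < i - 1) nth 0 u k + (i - 1) in
          x i = a \/ x i + n = a].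
Proof.
move=> /and3P[/andP[s1 sn] /eqP st /eqP sumt] /andP[y1 yn] xs x.
have n0 : 0 < n by lia.
have hN : P t s = n by rewrite -st P_full st sumt; lia.
have [j hj hmin] := @argmin_ex (fun m => resid n (y + P t m)) s s1.
set z := resid n (y + P t j).
have zr : 1 <= z <= n by apply: resid_range.
set g := fun m => z + (P t (j + m) - P t j).
have Pge : forall a c, P t a + c <= P t (a + c) by move=> a c; apply: P_ge.
have Pjs : P t (j + s) = P t j + n by rewrite addnC -st P_period st hN addnC.
have dlt : forall m, m < s -> P t (j + m) - P t j < n.
  move=> m hm; have := Pge (j + m) (s - m).
  have -> : j + m + (s - m) = j + s by lia.
  rewrite Pjs; have := Pge j m; lia.
have gres : forall m, m < s -> g m <= n /\ g m = resid n (y + P t ((j + m) %% s)).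
  move=> m hm.
  have e2 : resid n (y + P t (j + m)) = resid n (y + P t ((j + m) %% s)).
    by rewrite -st; apply: P_mod; rewrite st.
  have e1 : resid n (y + P t (j + m)) = resid n (z + (P t (j + m) - P t j)).
    rewrite /z resid_addl; congr resid; have := Pge j m; lia.
  have hm2 : z <= resid n (y + P t ((j + m) %% s)).
    by apply: hmin; rewrite ltn_pmod // ; lia.
  have dm := dlt m hm.
  have [le|gt] := leqP (z + (P t (j + m) - P t j)) n.
    split => //; rewrite -e2 e1 resid_id //; apply/andP; split => //; lia.
  exfalso; move: hm2; rewrite -e2 e1 resid_sub; first lia.
  apply/andP; split; lia.
set L := [seq g m | m <- iota 0 s].
have gmono : forall a b, a < b -> g a < g b.
  move=> a b ab; rewrite /g.
  have := Pge j a; have := Pge j b; have := Pge (j + a) (b - a).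
  have -> : j + a + (b - a) = j + b by lia.
  lia.
have Lsort : sorted ltn L.
  rewrite sorted_map; apply: sub_sorted (iota_ltn_sorted 0 s) => a b /=; exact: gmono.
have Luniq : uniq L by apply: (sorted_uniq ltn_trans ltnn).
have memC : forall r, r < s -> resid n (y + P t r) \in coalition n y t.
  move=> r hr; case: r hr => [|r] hr.
    by rewrite P0 addn0 resid_id ?y1 ?yn // mem_head.
  rewrite in_cons; apply/orP; right; apply/mapP; exists r.+2.
    by rewrite mem_iota st; lia.
  by rewrite phi_P //= st; lia.
have sub : {subset L <= coalition n y t}.
  move=> v /mapP[m]; rewrite mem_iota add0n => /andP[_ hm] ->.
  rewrite (gres m hm).2; apply: memC; rewrite ltn_pmod //; lia.
have sizeC : size (coalition n y t) = s by rewrite /= size_map size_iota st; lia.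
have [_ LC] := uniq_min_size Luniq sub ltac:(by rewrite sizeC size_map size_iota).
have Cuniq : uniq (coalition n y t).
  by rewrite (uniq_size_uniq Luniq LC) sizeC size_map size_iota.
have sortL : xs = L.
  apply: (sorted_eq leq_trans anti_leq); first exact: (sort_sorted leq_total).
    by apply: sub_sorted Lsort => a b /ltnW.
  by rewrite perm_sort perm_sym; apply: uniq_perm.
have xi : forall i, 1 <= i <= s -> x i = g i.-1.
  move=> i hi; rewrite /x sortL (nth_map 0); last by rewrite size_iota; lia.
  rewrite nth_iota ?add0n //; lia.
have x1 : x 1 = z by rewrite xi ?s1 // /g addn0 subnn addn0.
have es : s = s.-1.+1 by lia.
have CL : coalition n z (rot j t) = L.
  rewrite /coalition size_rot st /L es /= (iotaDl 1 1) -map_comp.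
  congr cons; first by rewrite /g addn0 subnn addn0.
  apply/eq_in_map => i; rewrite mem_iota => /andP[_ hi] /=.
  rewrite add1n phi_rot ?st; try lia.
  have := gres i; rewrite /g => h; rewrite resid_id //.
  have [h1 _] := h ltac:(lia); apply/andP; split => //; lia.
exists (rot j t); split.
- by rewrite /IA size_rot sumn_rot st s1 sn sumt !eqxx.
- by split; [rewrite size_rot | exists j; rewrite ?st].
- by rewrite x1 CL.
- move=> i hi /=; left; rewrite x1 xi; last lia.
  rewrite /g -addnA.
  have -> : \sum_(0 <= k < i - 1) nth 0 (rot j t) k + (i - 1) = phi (rot j t) (i - 1).+1.
    by rewrite /phi -sumS.
  rewrite phi_rot ?st; try lia.
  by rewrite subn1.
Qed.
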